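(* Let $\vec u, \vec v, \vec w \in \mathbb{F}^3$ be unit vectors such that $\vec u$ and $\vec v$ are not parallel (i.e. not scalar multiples of each other). Then there exist finitely many linear isometric automorphisms $h_0, \dots, h_{k-1} : \mathbb{F}^3 \to \mathbb{F}^3$, each of which fixes either $\vec u$ or $\vec v$, such that $(h_0 \circ \dots \circ h_{k-1})(\vec u) = \vec w$.
   Context: $\mathbb{F}$ is either $\mathbb{R}$ or $\mathbb{C}$, and $\mathbb{F}^3$ carries its standard inner product. *)

(* Defs.v *)
From HB Require Import structures.
From mathcomp Require Import all_boot all_order all_algebra.
From mathcomp Require Import complex.
From mathcomp Require Import Rstruct.
Set Implicit Arguments. Unset Strict Implicit. Unset Printing Implicit Defensive.
Import Order.TTheory GRing.Theory Num.Theory.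
Local Open Scope ring_scope.

(* Vectors of F^3 are row vectors 'rV[F]_3.  The standard inner product is
   <x, y> = \sum_i x_i * conj (y_i), where conj is the identity on the reals
   and complex conjugation on the complex numbers. *)
Definition inner (F : nzRingType) (conj : F -> F) (x y : 'rV[F]_3) : F :=
  \sum_(i < 3) x 0 i * conj (y 0 i).

Definition unit_vec (F : nzRingType) (conj : F -> F) (x : 'rV[F]_3) : Prop :=
  inner conj x x = 1.

Definition not_parallel (F : nzRingType) (u v : 'rV[F]_3) : Prop :=
  (~ exists a : F, u = a *: v) /\ (~ exists a : F, v = a *: u).

Definition lin_isom_aut (F : nzRingType) (conj : F -> F)
    (f : 'rV[F]_3 -> 'rV[F]_3) : Prop :=
  [/\ (forall (a : F) (x y : 'rV[F]_3), f (a *: x + y) = a *: f x + f y),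
      bijective f
    & (forall x : 'rV[F]_3, inner conj (f x) (f x) = inner conj x x)].

Definition compose_all (T : Type) (hs : seq (T -> T)) : T -> T :=
  foldr (fun h acc => h \o acc) id hs.

Definition lemma3p5_prop (F : nzRingType) (conj : F -> F) : Prop :=
  forall u v w : 'rV[F]_3,
    unit_vec conj u -> unit_vec conj v -> unit_vec conj w ->
    not_parallel u v ->
    exists hs : seq ('rV[F]_3 -> 'rV[F]_3),
      (forall h, List.In h hs ->
         lin_isom_aut conj h /\ (h u = u \/ h v = v)) /\
      compose_all hs u = w.

(* Main.v *)
Require Import Defs.
From mathcomp Require Import all_boot all_order all_algebra.
From mathcomp Require Import complex.
From mathcomp Require Import Rstruct.
From Stdlib Require Import Reals.
From mathcomp Require Import ring lra.
Set Implicit Arguments. Unset Strict Implicit. Unset Printing Implicit Defensive.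
Import Order.TTheory GRing.Theory Num.Theory.
Local Open Scope ring_scope.

Section Gen.
Variable F : numFieldType.
Variable conj : F -> F.
Hypothesis conjD : forall x y, conj (x + y) = conj x + conj y.
Hypothesis conjN : forall x, conj (- x) = - conj x.
Hypothesis conjM : forall x y, conj (x * y) = conj x * conj y.
Hypothesis conjK : forall x, conj (conj x) = x.
Hypothesis conj_ge0 : forall x : F, 0 <= x -> conj x = x.
Hypothesis mulJ_ge0 : forall x : F, 0 <= x * conj x.
Hypothesis mulJ_eq0 : forall x, x * conj x = 0 -> x = 0.
Hypothesis sqrt_ex : forall x : F, 0 <= x -> exists y, 0 <= y /\ y * y = x.
Hypothesis archi : forall x : F, 0 <= x -> exists n : nat, x <= n%:R.

Local Notation "<< x , y >>" := (inner conj x y).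
Local Notation V := 'rV[F]_3.

Lemma conj0 : conj 0 = 0.
Proof. by have := conj_ge0 (lexx 0). Qed.
Lemma conj1 : conj 1 = 1.
Proof. by apply: conj_ge0; exact: ler01. Qed.
Lemma conjB x y : conj (x - y) = conj x - conj y.
Proof. by rewrite conjD conjN. Qed.
Lemma conj_eq0 x : conj x = 0 -> x = 0.
Proof. by move=> h; rewrite -[x]conjK h conj0. Qed.

Lemma innerDl (x y z : V) : << x + y, z >> = << x, z >> + << y, z >>.
Proof. by rewrite /inner -big_split; apply: eq_bigr => i _; rewrite !mxE mulrDl. Qed.
Lemma innerZl a (x z : V) : << a *: x, z >> = a * << x, z >>.
Proof. by rewrite /inner mulr_sumr; apply: eq_bigr => i _; rewrite !mxE mulrA. Qed.
Lemma innerNl (x z : V) : << - x, z >> = - << x, z >>.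
Proof. by rewrite /inner -sumrN; apply: eq_bigr => i _; rewrite !mxE mulNr. Qed.
Lemma innerBl (x y z : V) : << x - y, z >> = << x, z >> - << y, z >>.
Proof. by rewrite innerDl innerNl. Qed.
Lemma innerDr (x y z : V) : << z, x + y >> = << z, x >> + << z, y >>.
Proof. by rewrite /inner -big_split; apply: eq_bigr => i _; rewrite !mxE conjD mulrDr. Qed.
Lemma innerZr a (x z : V) : << z, a *: x >> = conj a * << z, x >>.
Proof. by rewrite /inner mulr_sumr; apply: eq_bigr => i _; rewrite !mxE conjM mulrCA. Qed.
Lemma innerNr (x z : V) : << z, - x >> = - << z, x >>.
Proof. by rewrite /inner -sumrN; apply: eq_bigr => i _; rewrite !mxE conjN mulrN. Qed.
Lemma innerBr (x y z : V) : << z, x - y >> = << z, x >> - << z, y >>.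
Proof. by rewrite innerDr innerNr. Qed.
Lemma inner0l (z : V) : << 0, z >> = 0.
Proof. by rewrite /inner big1 // => i _; rewrite mxE mul0r. Qed.
Lemma inner0r (z : V) : << z, 0 >> = 0.
Proof. by rewrite /inner big1 // => i _; rewrite mxE conj0 mulr0. Qed.

Lemma conj_sum (I : finType) (f : I -> F) : conj (\sum_i f i) = \sum_i conj (f i).
Proof.
apply: (big_ind2 (fun a b => conj a = b)) => //; first exact: conj0.
by move=> a b c d <- <-; rewrite conjD.
Qed.

Lemma inner_conj (x y : V) : conj << x, y >> = << y, x >>.
Proof. by rewrite /inner conj_sum; apply: eq_bigr => i _; rewrite conjM conjK mulrC. Qed.

Lemma inner_ge0 (x : V) : 0 <= << x, x >>.
Proof. by apply: sumr_ge0 => i _. Qed.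

Lemma inner_eq0 (x : V) : << x, x >> = 0 -> x = 0.
Proof.
move=> /eqP; rewrite psumr_eq0 // => /allP h.
apply/rowP => i; rewrite mxE; apply: mulJ_eq0; apply/eqP.
by apply: h; rewrite mem_index_enum.
Qed.


Lemma conjV x : conj (x^-1) = (conj x)^-1.
Proof.
have [->|nz] := eqVneq x 0; first by rewrite invr0 conj0 invr0.
have h : conj x * conj (x^-1) = 1 by rewrite -conjM mulfV // conj1.
have nz' : conj x != 0 by apply/eqP => /conj_eq0; apply/eqP.
by rewrite -[conj x^-1]mul1r -(mulVf nz') -mulrA h mulr1.
Qed.

Definition unitv (x : V) := << x, x >> = 1.

Lemma N_split (x y : V) : unitv x -> unitv y ->
  << x - y, x - y >> = << x, x - y >> + conj << x, x - y >>.
Proof.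
move=> ux uy; rewrite inner_conj !innerBl !innerBr ux uy.
rewrite -(inner_conj y x); set a := << x, y >>. ring.
Qed.

Definition trv (x y z : V) : V := z - (<< z, x - y >> / << x, x - y >>) *: (x - y).

Lemma refl_inner (n : V) (p : F) : p != 0 -> << n, n >> = p + conj p ->
  forall z w, << z - (<< z, n >> / p) *: n, w - (<< w, n >> / p) *: n >> = << z, w >>.
Proof.
move=> pnz Nsp z w.
have pnz' : conj p != 0 by apply/eqP => /conj_eq0; apply/eqP.
rewrite !innerBl !innerBr !innerZl !innerZr Nsp.
rewrite -(inner_conj w n) conjM conjV.
rewrite -(inner_conj n z).
set A := << z, n >>. set B := conj << w, n >>. set q := conj p.
field. by rewrite pnz pnz'.
Qed.

Lemma trv_inner (x y : V) : unitv x -> unitv y -> x != y ->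
  forall z w, << trv x y z, trv x y w >> = << z, w >>.
Proof.
move=> ux uy nxy z w.
have Nsp := N_split ux uy.
have pnz : << x, x - y >> != 0.
  apply/eqP => p0; move: Nsp; rewrite p0 conj0 addr0 => /inner_eq0 /eqP.
  by rewrite subr_eq0 (negPf nxy).
exact: refl_inner.
Qed.
Lemma refl_cancel (n : V) (p : F) : p != 0 -> << n, n >> = p + conj p ->
  forall z, (fun z => z - (<< z, n >> / conj p) *: n)
             ((fun z => z - (<< z, n >> / p) *: n) z) = z.
Proof.
move=> pnz Nsp z /=.
have pnz' : conj p != 0 by apply/eqP => /conj_eq0; apply/eqP.
rewrite innerBl innerZl Nsp.
apply/rowP => i; rewrite !mxE.
set A := << z, n >>. set q := conj p.
field. by rewrite pnz pnz'.
Qed.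

Lemma id_lin_isom : lin_isom_aut conj (fun z : V => z).
Proof. split => //; exact: (@Bijective _ _ _ (fun z : V => z)). Qed.

Lemma T_lemma (a x y : V) : unitv x -> unitv y -> << x, a >> = << y, a >> ->
  exists h : V -> V, [/\ lin_isom_aut conj h, h a = a, h x = y &
     forall z w, << h z, h w >> = << z, w >>].
Proof.
move=> ux uy hxa.
have [<-|nxy] := eqVneq x y.
  by exists (fun z : V => z); split => //; exact: id_lin_isom.
have Nsp := N_split ux uy.
set n := x - y in Nsp.
set p := << x, n >> in Nsp.
have pnz : p != 0.
  apply/eqP => p0; move: Nsp; rewrite p0 conj0 addr0 => /inner_eq0 /eqP.
  by rewrite subr_eq0 (negPf nxy).
have Nsp' : << n, n >> = conj p + conj (conj p) by rewrite conjK addrC.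
have pnz' : conj p != 0 by apply/eqP => /conj_eq0; apply/eqP.
have hinner := refl_inner pnz Nsp.
exists (fun z => z - (<< z, n >> / p) *: n); split.
- split.
  + move=> al z w; rewrite innerDl innerZl.
    apply/rowP => i; rewrite !mxE.
    set A := << z, n >>; set B := << w, n >>. field. exact: pnz.
  + exists (fun z => z - (<< z, n >> / conj p) *: n).
    * exact: refl_cancel pnz Nsp.
    * move=> z; have := refl_cancel pnz' Nsp' z; by rewrite conjK.
  + by move=> z; rewrite hinner.
- have -> : << a, n >> = 0.
    by rewrite /n innerBr -(inner_conj x a) -(inner_conj y a) hxa subrr.
  by rewrite mul0r scale0r subr0.
- by rewrite /p mulfV // scale1r /n opprB addrC subrK.
- exact: hinner.
Qed.

Lemma ortho2 (x x' : V) : exists m : V, [/\ m != 0, << m, x >> = 0 & << m, x' >> = 0].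
Proof.
pose A : 'M[F]_(3, 2) := \matrix_(i, j) conj ((if j == ord0 then x else x') 0 i).
pose B := kermx A.
have Bnz : B != 0.
  rewrite /B kermx_eq0 /row_free; apply/negP => /eqP h.
  by have := rank_leq_col A; rewrite h.
have [i Hi] : exists i, row i B != 0.
  apply/existsP; apply: contraR Bnz; rewrite negb_exists => /forallP h.
  apply/eqP/row_matrixP => i; rewrite row0; exact/eqP/negbNE/h.
have hm : row i B *m A = 0 by rewrite -row_mul mulmx_ker row0.
have key : forall j, \sum_k row i B 0 k * A k j = 0.
  by move=> j; have := congr1 (fun M : 'M[F]_(1, 2) => M 0 j) hm; rewrite !mxE.
exists (row i B); split => //.
- rewrite -[RHS](key ord0) /inner; apply: eq_bigr => k _; by rewrite !mxE.
- rewrite -[RHS](key (lift ord0 ord0)) /inner; apply: eq_bigr => k _; by rewrite !mxE.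
Qed.

Lemma normalize (z : V) : z != 0 -> exists c : F, 0 <= c /\ unitv (c *: z).
Proof.
move=> nz.
have N0 : << z, z >> != 0 by apply: contra nz => /eqP /inner_eq0 ->.
have [s [s0 ss]] := sqrt_ex (inner_ge0 z).
have snz : s != 0 by apply: contra N0 => /eqP s0'; rewrite -ss s0' mul0r.
exists s^-1; split; first by rewrite invr_ge0.
rewrite /unitv innerZl innerZr conj_ge0 ?invr_ge0 // -ss.
by field.
Qed.

Section Reach.
Variables u v : V.

Definition allowed (h : V -> V) :=
  [/\ lin_isom_aut conj h, (h u = u \/ h v = v) & forall z w, << h z, h w >> = << z, w >>].

Definition Reach (x y : V) := exists hs : seq (V -> V),
  [/\ forall h, List.In h hs -> allowed h, compose_all hs u = x & compose_all hs v = y].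

Lemma compose_all_rcons (hs : seq (V -> V)) h z :
  compose_all (hs ++ [:: h]) z = compose_all hs (h z).
Proof. by elim: hs => [|a hs IH] //=; rewrite IH. Qed.

Lemma In_rcons (hs : seq (V -> V)) h a :
  List.In a (hs ++ [:: h]) -> List.In a hs \/ a = h.
Proof.
elim: hs => [|b hs IH] /=; first by case=> [->|[]]; right.
by case=> [->|/IH [H|H]]; [left; left | left; right | right].
Qed.

Lemma allowed_comp (hs : seq (V -> V)) : (forall h, List.In h hs -> allowed h) ->
  bijective (compose_all hs) /\ forall z w, << compose_all hs z, compose_all hs w >> = << z, w >>.
Proof.
elim: hs => [|h hs IH] /= H.
  by split => //; exact: (@Bijective _ _ _ (fun z : V => z)).
have [[_ bh _] _ ih] := H h (or_introl erefl).
have [bg ig] := IH (fun a Ha => H a (or_intror Ha)).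
split; first exact: bij_comp.
by move=> z w /=; rewrite ih ig.
Qed.

Lemma Reach0 : Reach u v.
Proof. by exists [::]; split. Qed.

Lemma Reach_inner x y : Reach x y -> << x, y >> = << u, v >>.
Proof. by case=> hs [H <- <-]; have [_ ->] := allowed_comp H. Qed.

Lemma moveA x y y' : unitv v -> Reach x y -> unitv y' -> << x, y' >> = << u, v >> ->
  Reach x y'.
Proof.
move=> uv [hs [H hx hy]] uy' hxy.
have [[gi c1 c2] ig] := allowed_comp H.
have gz : compose_all hs (gi y') = y' by apply: c2.
have uz : unitv (gi y').
  by rewrite /unitv -(ig (gi y') (gi y')) gz.
have huz : << u, gi y' >> = << u, v >>.
  by rewrite -(ig u (gi y')) gz hx.
have hvz : << v, u >> = << gi y', u >>.
  by rewrite -(inner_conj u v) -(inner_conj u (gi y')) huz.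
have [h [lh hu hv ih]] := T_lemma uv uz hvz.
exists (hs ++ [:: h]); split.
- move=> a /In_rcons [/H //|->]; split => //; by left.
- by rewrite compose_all_rcons hu.
- by rewrite compose_all_rcons hv.
Qed.

Lemma moveB x y x' : unitv u -> Reach x y -> unitv x' -> << x', y >> = << u, v >> ->
  Reach x' y.
Proof.
move=> uu [hs [H hx hy]] ux' hxy.
have [[gi c1 c2] ig] := allowed_comp H.
have gz : compose_all hs (gi x') = x' by apply: c2.
have uz : unitv (gi x').
  by rewrite /unitv -(ig (gi x') (gi x')) gz.
have hzv : << u, v >> = << gi x', v >>.
  by rewrite -(ig (gi x') v) gz hy.
have [h [lh hv hu ih]] := T_lemma uu uz hzv.
exists (hs ++ [:: h]); split.
- move=> a /In_rcons [/H //|->]; split => //; by right.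
- by rewrite compose_all_rcons hu.
- by rewrite compose_all_rcons hv.
Qed.
Hypothesis uu : unitv u.
Hypothesis uv : unitv v.
Hypothesis npar : forall a : F, u != a *: v.

Local Notation c := << u, v >>.
Local Notation kap := (<< u, v >> * conj << u, v >>).

Lemma kap_ge0 : 0 <= kap.
Proof. exact: mulJ_ge0. Qed.

Lemma kap_lt1 : kap < 1.
Proof.
have e : << u - c *: v, u - c *: v >> = 1 - kap.
  rewrite !innerBl !innerBr !innerZl !innerZr uu uv -(inner_conj u v).
  ring.
have nz : u - c *: v != 0 by rewrite subr_eq0 npar.
rewrite -subr_gt0 -e lt0r inner_ge0 andbT.
by apply: contra nz => /eqP /inner_eq0 ->.
Qed.

Definition S x := exists y, Reach x y.

Lemma step x x' : S x -> unitv x -> unitv x' -> kap <= << x, x' >> -> S x'.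
Proof.
move=> [y0 R0] ux ux' hk.
have r0 : 0 <= << x, x' >> := le_trans kap_ge0 hk.
have cr : conj << x, x' >> = << x, x' >> := conj_ge0 r0.
have rx : << x', x >> = << x, x' >> by rewrite -(inner_conj x x') cr.
move: r0 cr rx hk; set r := << x, x' >> => r0 cr rx hk.
have [m [mnz mx mx']] := ortho2 x x'.
have [mh [um mhx mhx']] : exists mh, [/\ unitv mh, << mh, x >> = 0 & << mh, x' >> = 0].
  have [cm [cm0 um]] := normalize mnz.
  by exists (cm *: m); rewrite !innerZl mx mx' mulr0.
have hr : << x, x' >> = r by [].
clearbody r.
have xmh : << x, mh >> = 0 by rewrite -(inner_conj mh x) mhx conj0.
have xmh' : << x', mh >> = 0 by rewrite -(inner_conj mh x') mhx' conj0.
have r1 : 0 < 1 + r by apply: (lt_le_trans ltr01); rewrite lerDl.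
have r1nz : 1 + r != 0 by rewrite gt_eqF.
have q0 : 0 <= 1 - (kap + kap) / (1 + r).
  rewrite subr_ge0 ler_pdivrMr // mul1r.
  by apply: lerD => //; apply: ltW; exact: kap_lt1.
have [t [t0 tt]] := sqrt_ex q0.
have s0 : 0 <= (1 + r)^-1 by rewrite invr_ge0 ltW.
pose y' := (conj c * (1 + r)^-1) *: (x + x') + t *: mh.
have uy' : unitv y'.
  rewrite /unitv /y' !innerDl !innerDr !innerZl !innerZr !innerDl !innerDr.
  rewrite mhx mhx' xmh xmh' ux ux' um rx conjM conjK (conj_ge0 s0) (conj_ge0 t0).
  rewrite hr !addr0 !mulr0 !addr0 mulr1 tt.
  field. by rewrite r1nz.
have xy' : << x, y' >> = c.
  rewrite /y' !innerDr !innerZr !innerDr xmh ux hr.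
  rewrite conjM conjK (conj_ge0 s0).
  field. by rewrite r1nz.
have x'y' : << x', y' >> = c.
  rewrite /y' !innerDr !innerZr !innerDr xmh' ux' rx.
  rewrite conjM conjK (conj_ge0 s0).
  field. by rewrite r1nz.
exists y'.
apply: (moveB uu _ ux' x'y').
exact: (moveA uv R0 uy' xy').
Qed.

Lemma halving n : forall p q, unitv p -> unitv q -> 0 <= << p, q >> ->
  1 - << p, q >> <= 2%:R ^+ n * (1 - kap) -> S p -> S q.
Proof.
elim: n => [|n IH] p q up uq t0 hb Sp.
  by apply: (step Sp up uq); move: hb; rewrite expr0 mul1r lerD2l lerN2.
have [t ht] : exists t, << p, q >> = t by eexists.
rewrite ht in t0 hb.
have ct : conj t = t := conj_ge0 t0.
have qp : << q, p >> = t by rewrite -(inner_conj p q) ht ct.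
have d : << p - q, p - q >> = 2%:R * (1 - t).
  rewrite !innerBl !innerBr up uq ht qp; ring.
have t1 : t <= 1.
  have := inner_ge0 (p - q); rewrite d pmulr_rge0 ?ltr0n // subr_ge0 //.
have pt : 0 < 1 + t by apply: (lt_le_trans ltr01); rewrite lerDl.
have [s [s0 ss]] : exists s, 0 <= s /\ s * s = 2%:R * (1 + t).
  by apply: sqrt_ex; rewrite mulr_ge0 ?ler0n // ltW.
have snz : s != 0.
  by apply/eqP => s00; move: ss; rewrite s00 mul0r => /esym /eqP; rewrite mulf_eq0 pnatr_eq0 /= gt_eqF.
have si0 : 0 <= s^-1 by rewrite invr_ge0.
have [m [um pm mq]] : exists m, [/\ unitv m, << p, m >> = (1 + t) / s & << m, q >> = (1 + t) / s].
  exists (s^-1 *: (p + q)); split.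
  - rewrite /unitv innerZl innerZr !innerDl !innerDr up uq ht qp (conj_ge0 si0).
    have -> : 1 + t + (t + 1) = s * s by rewrite ss; ring.
    by field.
  - by rewrite innerZr innerDr up ht (conj_ge0 si0) mulrC.
  - by rewrite innerZl innerDl uq ht addrC mulrC.
have t'0 : 0 <= (1 + t) / s by rewrite divr_ge0 // ltW.
have two0 : (2%:R : F) != 0 by rewrite pnatr_eq0.
have e2 : (1 + t) / s = s / 2%:R.
  have -> : 1 + t = s * s / 2%:R by rewrite ss; field.
  by field.
have hs : 1 + t <= s.
  have h2 : (1 + t) ^+ 2 <= s ^+ 2.
    rewrite !expr2 ss ler_wpM2r ?(ltW pt) //.
    by rewrite -[2%:R]/(1 + 1 : F) lerD2l.
  by move: h2; rewrite ler_sqr ?nnegrE ?(ltW pt).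
have bnd : 1 - (1 + t) / s <= 2%:R ^+ n * (1 - kap).
  have -> : 1 - (1 + t) / s = (1 - t) / 2%:R - (s - (1 + t)) / 2%:R.
    by rewrite e2; field.
  apply: (@le_trans _ _ ((1 - t) / 2%:R)).
    by rewrite gerBl; apply: divr_ge0; rewrite ?ler0n // subr_ge0.
  rewrite ler_pdivrMr ?ltr0n //.
  by move: hb; rewrite exprS; congr (_ <= _); ring.
apply: (IH m q um uq); rewrite ?mq //.
apply: (IH p m up um); rewrite ?pm //.
Qed.

Lemma nonneg_move p q : S p -> unitv p -> unitv q -> 0 <= << p, q >> -> S q.
Proof.
move=> Sp up uq t0.
have K0 : 0 < 1 - kap by rewrite subr_gt0 kap_lt1.
have Ki : 0 <= (1 - kap)^-1 by rewrite invr_ge0 ltW.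
have [N hN] := archi Ki.
have b1 : 1 <= 2%:R ^+ N * (1 - kap).
  rewrite -ler_pdivrMr // div1r; apply: (le_trans hN).
  by rewrite -natrX ler_nat; apply: ltnW; apply: ltn_expl.
apply: (halving (n := N) up uq t0 _ Sp).
by apply: le_trans b1; rewrite gerBl.
Qed.

Lemma all_S q : unitv q -> S q.
Proof.
move=> uq.
have [m [um um0 mq]] : exists m, [/\ unitv m, << u, m >> = 0 & 0 <= << m, q >>].
  have [w0 hw0] : exists w0, w0 = q - << q, u >> *: u by eexists.
  have w0u : << w0, u >> = 0 by rewrite hw0 innerBl innerZl uu mulr1 subrr.
  have [/eqP w00|w0nz] := eqVneq w0 0.
    have [m0 [m0nz m0u _]] := ortho2 u u.
    have [c0 [c00 uc]] := normalize m0nz.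
    exists (c0 *: m0); split => //.
      by rewrite -inner_conj innerZl m0u mulr0 conj0.
    move: w00; rewrite hw0 subr_eq0 => /eqP ->.
    by rewrite innerZr innerZl m0u !mulr0.
  have [c0 [c00 uc]] := normalize w0nz.
  exists (c0 *: w0); split => //.
    by rewrite -inner_conj innerZl w0u mulr0 conj0.
  have e : << w0, q >> = << w0, w0 >>.
    by rewrite {3}hw0 innerBr innerZr w0u mulr0 subr0.
  by rewrite innerZl e mulr_ge0 // inner_ge0.
apply: (nonneg_move _ um uq mq).
apply: (nonneg_move _ uu um); first by exists v; exact: Reach0.
by rewrite um0.
Qed.

End Reach.

Lemma gen_main : lemma3p5_prop conj.
Proof.
move=> u v w uu uv uw [np1 np2].
have npar : forall a, u != a *: v by move=> a; apply/eqP => e; apply: np1; exists a.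
have [y [hs [H hw _]]] := all_S uu uv npar uw.
exists hs; split => // h /H [lh fx _]; by split.
Qed.

End Gen.


Lemma real_case : lemma3p5_prop (fun x : R => x).
Proof.
apply: gen_main => //.
- by move=> x; rewrite -expr2 sqr_ge0.
- by move=> x /eqP; rewrite mulf_eq0 orbb => /eqP.
- move=> x x0; exists (Num.sqrt x); split; first exact: sqrtr_ge0.
  by rewrite -expr2 sqr_sqrtr.
- by move=> x x0; exists (Num.bound x); apply: ltW; apply: archi_boundP.
Qed.

Lemma cplx_case : lemma3p5_prop (fun z : R[i] => conjc z).
Proof.
apply: gen_main.
- exact: rmorphD.
- exact: rmorphN.
- exact: rmorphM.
- exact: conjcK.
- case=> a b; rewrite lecE /= => /andP [/eqP -> _]; by rewrite /= oppr0.
- exact: mulcJ_ge0.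
- move=> x; rewrite -sqr_normc => /eqP; rewrite expf_eq0 /= normr_eq0 => /eqP //.
- move=> x x0; exists (sqrtC x); split; first by rewrite sqrtC_ge0.
  by rewrite -expr2 sqrtCK.
- case=> a b; rewrite lecE /= => /andP [/eqP -> a0].
  exists (Num.bound a); rewrite -(rmorph_nat (real_complex R)) complexr0 lecR.
  by apply: ltW; apply: archi_boundP.
Qed.

Theorem lemma3p5 :
  lemma3p5_prop (fun x : R => x) /\
  lemma3p5_prop (fun z : R[i] => conjc z).
Proof. split; [exact: real_case | exact: cplx_case]. Qed.
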